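(* Let $X$ be a compact ultrametric space with a finite similarity structure $\mathrm{Sim}_X$ satisfying $|\mathrm{Sim}_X(B_1,B_2)|\le1$ for all balls $B_1,B_2\subseteq X$. Then there is a linear order $\le$ on $X$ such that every $\gamma\in\mathrm{Sim}_X(B_1,B_2)$ is order-preserving, for all balls $B_1,B_2$.
   Context: Balls in $X$ are closed metric balls of positive radius. A *finite similarity structure* $\mathrm{Sim}_X$ assigns to each ordered pair of balls $B_1,B_2$ a finite (possibly empty) set $\mathrm{Sim}_X(B_1,B_2)$ of surjective similarities $B_1\to B_2$ (maps scaling all distances by a fixed positive constant), such that $\mathrm{id}_{B_1}\in\mathrm{Sim}_X(B_1,B_1)$, the sets are closed under inverses and compositions, and if $h\in\mathrm{Sim}_X(B_1,B_2)$ and $B_3\subseteq B_1$ is a ball then $h|_{B_3}\in\mathrm{Sim}_X(B_3,h(B_3))$. *)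

(* Defs.v *)
From Stdlib Require Import Reals List.
Open Scope R_scope.

Section Defs.
Context {X : Type} (d : X -> X -> R).

Definition is_metric : Prop :=
  (forall x y, 0 <= d x y) /\
  (forall x y, d x y = 0 <-> x = y) /\
  (forall x y, d x y = d y x) /\
  (forall x y z, d x z <= d x y + d y z).

Definition ultrametric : Prop :=
  forall x y z, d x z <= Rmax (d x y) (d y z).

Definition is_open (U : X -> Prop) : Prop :=
  forall x, U x -> exists eps, 0 < eps /\ forall y, d x y < eps -> U y.

Definition metric_compact : Prop :=
  forall (I : Type) (U : I -> X -> Prop),
    (forall i, is_open (U i)) ->
    (forall x, exists i, U i x) ->
    exists l : list I, forall x, exists i, In i l /\ U i x.

Definition is_ball (B : X -> Prop) : Prop :=
  exists c r, 0 < r /\ forall x, B x <-> d c x <= r.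

Definition set_eq (A B : X -> Prop) : Prop := forall x, A x <-> B x.
Definition subset (A B : X -> Prop) : Prop := forall x, A x -> B x.
Definition image (h : X -> X) (A : X -> Prop) : X -> Prop :=
  fun y => exists x, A x /\ h x = y.

Definition surj_similarity (B1 B2 : X -> Prop) (h : X -> X) : Prop :=
  (forall x, B1 x -> B2 (h x)) /\
  (forall y, B2 y -> exists x, B1 x /\ h x = y) /\
  (exists lam, 0 < lam /\ forall x y, B1 x -> B1 y -> d (h x) (h y) = lam * d x y).

(** Maps B1 -> B2 are represented by functions X -> X, two of them being
    identified when they agree on B1.  [Sim B1 B2 h] means that (the
    restriction to B1 of) h belongs to Sim_X(B1,B2). *)
Definition finite_similarity_structure
  (Sim : (X -> Prop) -> (X -> Prop) -> (X -> X) -> Prop) : Prop :=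
  (* Sim(B1,B2) depends only on the sets B1, B2 and the restriction h|B1 *)
  (forall B1 B2 B1' B2' h h', is_ball B1 -> is_ball B2 ->
     set_eq B1 B1' -> set_eq B2 B2' -> (forall x, B1 x -> h x = h' x) ->
     Sim B1 B2 h -> Sim B1' B2' h') /\
  (forall B1 B2 h, is_ball B1 -> is_ball B2 -> Sim B1 B2 h ->
     surj_similarity B1 B2 h) /\
  (forall B1 B2, is_ball B1 -> is_ball B2 ->
     exists l : list (X -> X), forall h, Sim B1 B2 h ->
       exists h', In h' l /\ forall x, B1 x -> h x = h' x) /\
  (forall B, is_ball B -> Sim B B (fun x => x)) /\
  (forall B1 B2 h, is_ball B1 -> is_ball B2 -> Sim B1 B2 h ->
     exists g, Sim B2 B1 g /\ (forall x, B1 x -> g (h x) = x) /\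
               (forall y, B2 y -> h (g y) = y)) /\
  (forall B1 B2 B3 h g, is_ball B1 -> is_ball B2 -> is_ball B3 ->
     Sim B1 B2 h -> Sim B2 B3 g -> Sim B1 B3 (fun x => g (h x))) /\
  (forall B1 B2 B3 h, is_ball B1 -> is_ball B2 -> is_ball B3 ->
     subset B3 B1 -> Sim B1 B2 h -> Sim B3 (image h B3) h).

End Defs.

Definition linear_order {X : Type} (le : X -> X -> Prop) : Prop :=
  (forall x, le x x) /\
  (forall x y, le x y -> le y x -> x = y) /\
  (forall x y z, le x y -> le y z -> le x z) /\
  (forall x y, le x y \/ le y x).

Definition order_preserving_on {X : Type} (le : X -> X -> Prop)
  (B : X -> Prop) (h : X -> X) : Prop :=
  forall x y, B x -> B y -> le x y -> le (h x) (h y).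

(* Main.v *)
Require Import Defs.
From Stdlib Require Import Reals List.
From Stdlib Require Import Arith Lra Lia Classical ClassicalEpsilon FunctionalExtensionality PropExtensionality Wf_nat.
Open Scope R_scope.

Section S.
Variable X : Type.
Variable d : X -> X -> R.
Variable Sim : (X -> Prop) -> (X -> Prop) -> (X -> X) -> Prop.
Hypothesis Hmet : is_metric d.
Hypothesis Hult : ultrametric d.
Hypothesis Hcpt : metric_compact d.
Hypothesis HSim : finite_similarity_structure d Sim.
Hypothesis Hone : forall B1 B2 h h', is_ball d B1 -> is_ball d B2 ->
     Sim B1 B2 h -> Sim B1 B2 h' -> forall x, B1 x -> h x = h' x.

Lemma d_pos x y : 0 <= d x y. Proof. apply Hmet. Qed.
Lemma d_eq0 x y : d x y = 0 <-> x = y. Proof. apply Hmet. Qed.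
Lemma d_sym x y : d x y = d y x. Proof. apply Hmet. Qed.
Lemma d_refl x : d x x = 0. Proof. apply d_eq0; reflexivity. Qed.
Lemma d_neq x y : x <> y -> 0 < d x y.
Proof. intro h. destruct (d_pos x y) as [H|H]; auto. exfalso; apply h, d_eq0; auto. Qed.

Lemma ult x y z : d x z <= d x y \/ d x z <= d y z.
Proof. pose proof (Hult x y z) as H. unfold Rmax in H.
  destruct (Rle_dec (d x y) (d y z)); auto. Qed.

Lemma set_ext (A B : X -> Prop) : (forall x, A x <-> B x) -> A = B.
Proof. intro h. apply functional_extensionality; intro x.
  apply propositional_extensionality; auto. Qed.

Lemma S_id B : is_ball d B -> Sim B B (fun x => x).
Proof. destruct HSim as (_&_&_&H&_). auto. Qed.
Lemma S_surj B1 B2 h : is_ball d B1 -> is_ball d B2 -> Sim B1 B2 h ->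
  surj_similarity d B1 B2 h.
Proof. destruct HSim as (_&H&_). auto. Qed.
Lemma S_inv B1 B2 h : is_ball d B1 -> is_ball d B2 -> Sim B1 B2 h ->
     exists g, Sim B2 B1 g /\ (forall x, B1 x -> g (h x) = x) /\
               (forall y, B2 y -> h (g y) = y).
Proof. destruct HSim as (_&_&_&_&H&_). auto. Qed.
Lemma S_comp B1 B2 B3 h g : is_ball d B1 -> is_ball d B2 -> is_ball d B3 ->
     Sim B1 B2 h -> Sim B2 B3 g -> Sim B1 B3 (fun x => g (h x)).
Proof. destruct HSim as (_&_&_&_&_&H&_). intros; apply (H B1 B2 B3); auto. Qed.
Lemma S_res B1 B2 B3 h : is_ball d B1 -> is_ball d B2 -> is_ball d B3 ->
     subset B3 B1 -> Sim B1 B2 h -> Sim B3 (image h B3) h.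
Proof. destruct HSim as (_&_&_&_&_&_&H). intros; apply (H B1 B2 B3); auto. Qed.

Definition Rr (B : X -> Prop) u v := exists p q, B p /\ B q /\ d u v < d p q.

Lemma Rr_sym B u v : Rr B u v -> Rr B v u.
Proof. intros (p&q&h1&h2&h3). exists p, q. rewrite d_sym. auto. Qed.
Lemma Rr_trans B a b c : Rr B a b -> Rr B b c -> Rr B a c.
Proof. intros (p&q&h1&h2&h3) (p'&q'&h1'&h2'&h3').
  destruct (ult a b c).
  - exists p, q; repeat split; auto; lra.
  - exists p', q'; repeat split; auto; lra. Qed.

Lemma ball_in2 B x p q w : is_ball d B -> B x -> B p -> B q -> d x w <= d p q -> B w.
Proof. intros (c&r&hr&hB) Bx Bp Bq h. apply hB in Bx; apply hB in Bp; apply hB in Bq.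
  apply hB. assert (d p q <= r).
  { rewrite (d_sym c p) in Bp. destruct (ult p c q); lra. }
  destruct (ult c x w); lra. Qed.

Definition nondeg (B : X -> Prop) := exists p q, B p /\ B q /\ p <> q.
Definition LstP (B : X -> Prop) (l : list X) := forall u, B u -> nondeg B ->
  exists i w, nth_error l i = Some w /\ Rr B w u.

Lemma Lst_ex B : is_ball d B -> exists l, LstP B l.
Proof.
  intro HB. destruct (classic (nondeg B)) as [nd|nd];
    [|exists nil; intros u _ h; contradiction].
  destruct nd as (p&q&Bp&Bq&pq). pose proof (d_neq _ _ pq) as dpq.
  set (U := fun u v => (B u /\ B v /\ Rr B u v) \/ ~ B v).
  destruct (Hcpt X U) as [l Hl].
  - intros u v [[Bu [Bv (p'&q'&Bp'&Bq'&h)]]|nBv].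
    + exists (d p' q' - d u v). split; [lra|]. intros y hy.
      pose proof (d_pos u v). left. split; [auto|split].
      * apply (ball_in2 B v p' q' y); auto; lra.
      * exists p', q'. repeat split; auto. destruct (ult u v y); lra.
    + destruct HB as (c&r&hr&hB).
      assert (r < d c v). { destruct (Rlt_le_dec r (d c v)); auto. exfalso; apply nBv, hB; auto. }
      exists (d c v - r). split; [lra|]. intros y hy. right. intro By. apply hB in By.
      pose proof (d_sym y v). destruct (ult c y v); lra.
  - intro v. exists v. destruct (classic (B v)) as [Bv|Bv]; [left|right; auto].
    repeat split; auto. exists p, q. rewrite d_refl. auto.
  - exists l. intros u Bu _. destruct (Hl u) as [w [Inw [[Bw [_ R]]|nB]]]; [|contradiction].
    apply In_nth_error in Inw. destruct Inw as [n hn]. exists n, w; auto.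
Qed.

Definition Lst B := epsilon (inhabits (@nil X)) (fun l => LstP B l).
Lemma Lst_spec B : is_ball d B -> LstP B (Lst B).
Proof. intro HB. unfold Lst. apply epsilon_spec. apply Lst_ex; auto. Qed.

Definition O B u v := forall i w, nth_error (Lst B) i = Some w -> Rr B w v ->
  exists j w', (j <= i)%nat /\ nth_error (Lst B) j = Some w' /\ Rr B w' u.

Lemma O_total B u v : O B u v \/ O B v u.
Proof.
  destruct (classic (O B u v)) as [h|h]; [left; auto|right].
  unfold O in h. apply not_all_ex_not in h. destruct h as [i h].
  apply not_all_ex_not in h. destruct h as [w h].
  apply imply_to_and in h. destruct h as [hi h]. apply imply_to_and in h. destruct h as [hw h].
  intros k w2 hk Rk. exists i, w. split; [|split; auto].
  destruct (Compare_dec.le_lt_dec i k); auto. exfalso; apply h. exists k, w2. split; [lia|auto].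
Qed.

Lemma O_trans B u v w : O B u v -> O B v w -> O B u w.
Proof.
  intros h1 h2 i a hi ha. destruct (h2 i a hi ha) as (j&b&hj&hb&Rb).
  destruct (h1 j b hb Rb) as (k&c&hk&hc&Rc). exists k, c. split; [lia|auto].
Qed.

Lemma O_R B u v : Rr B u v -> O B u v.
Proof. intros h i w hi hw. exists i, w. split; [lia|split; auto].
  eapply Rr_trans; eauto. apply Rr_sym; auto. Qed.

Lemma min_nat (P : nat -> Prop) : forall n, P n -> exists m, P m /\ forall k, P k -> (m <= k)%nat.
Proof.
  intro n. induction n as [n IH] using (well_founded_induction lt_wf). intros Pn.
  destruct (classic (exists k, P k /\ (k < n)%nat)) as [[k [Pk lt]]|no].
  - apply (IH k lt Pk).
  - exists n. split; auto. intros k Pk. destruct (Compare_dec.le_lt_dec n k); auto.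
    exfalso; apply no; eauto.
Qed.

Lemma O_anti B u v : is_ball d B -> B u -> B v -> O B u v -> O B v u -> u = v \/ Rr B u v.
Proof.
  intros HB Bu Bv h1 h2. destruct (classic (nondeg B)) as [nd|nd].
  - destruct (Lst_spec B HB u Bu nd) as (i&w&hi&hw).
    destruct (min_nat (fun i => exists w, nth_error (Lst B) i = Some w /\ Rr B w u) i)
      as (i0&(w0&hi0&hw0)&hmin); [eauto|].
    destruct (h2 i0 w0 hi0 hw0) as (j&w1&hj&hj1&Rj).
    destruct (h1 j w1 hj1 Rj) as (k&w2&hk&hk2&Rk).
    assert (i0 <= k)%nat by (apply hmin; eauto).
    assert (j = i0) by lia. subst j. rewrite hi0 in hj1. injection hj1 as <-.
    right. eapply Rr_trans; [apply Rr_sym; exact hw0|exact Rj].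
  - left. apply NNPP. intro neq. apply nd. exists u, v. auto.
Qed.

Definition cls (B : X -> Prop) := fun B0 => is_ball d B0 /\ exists g, Sim B B0 g.
Definition Rep B := epsilon (inhabits (fun _ : X => True)) (cls B).

Lemma Rep_spec B : is_ball d B -> is_ball d (Rep B) /\ exists g, Sim B (Rep B) g.
Proof. intro HB. apply (epsilon_spec (inhabits (fun _ : X => True)) (cls B)).
  exists B. split; auto. exists (fun x => x). apply S_id; auto. Qed.

Lemma cls_eq B B' h : is_ball d B -> is_ball d B' -> Sim B B' h -> cls B = cls B'.
Proof.
  intros HB HB' Hh. apply functional_extensionality; intro B0.
  apply propositional_extensionality. unfold cls. split; intros [HB0 [g Hg]]; split; auto.
  - destruct (S_inv _ _ _ HB HB' Hh) as (k&Hk&_).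
    exists (fun x => g (k x)). apply (S_comp B' B B0 k g); auto.
  - exists (fun x => g (h x)). apply (S_comp B B' B0 h g); auto.
Qed.

Lemma Rep_eq B B' h : is_ball d B -> is_ball d B' -> Sim B B' h -> Rep B = Rep B'.
Proof. intros. unfold Rep. erewrite cls_eq; eauto. Qed.

Lemma Rr_transp B B0 g u v : is_ball d B -> is_ball d B0 -> Sim B B0 g -> B u -> B v ->
  (Rr B u v <-> Rr B0 (g u) (g v)).
Proof.
  intros HB HB0 Hg Bu Bv. destruct (S_surj _ _ _ HB HB0 Hg) as (Hm&Hs&lam&hl&Hd).
  split.
  - intros (p&q&Bp&Bq&h). exists (g p), (g q). repeat split; auto.
    rewrite !Hd; auto. apply Rmult_lt_compat_l; auto.
  - intros (p'&q'&Bp'&Bq'&h). destruct (Hs _ Bp') as (p&Bp&<-).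
    destruct (Hs _ Bq') as (q&Bq&<-). exists p, q. repeat split; auto.
    rewrite !Hd in h; auto. apply Rmult_lt_reg_l in h; auto.
Qed.

Lemma S_injective B B0 g u v : is_ball d B -> is_ball d B0 -> Sim B B0 g -> B u -> B v ->
  g u = g v -> u = v.
Proof.
  intros HB HB0 Hg Bu Bv e. destruct (S_surj _ _ _ HB HB0 Hg) as (Hm&Hs&lam&hl&Hd).
  apply d_eq0. pose proof (Hd u v Bu Bv) as h. rewrite e, d_refl in h.
  symmetry in h. apply Rmult_integral in h. destruct h; auto. lra.
Qed.

Definition ORD B u v := exists g, Sim B (Rep B) g /\ O (Rep B) (g u) (g v).

Lemma ORD_total B u v : is_ball d B -> ORD B u v \/ ORD B v u.
Proof. intro HB. destruct (Rep_spec B HB) as [_ [g Hg]].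
  destruct (O_total (Rep B) (g u) (g v)); [left|right]; exists g; auto. Qed.

Lemma ORD_trans B u v w : is_ball d B -> B u -> B v -> B w ->
  ORD B u v -> ORD B v w -> ORD B u w.
Proof.
  intros HB Bu Bv Bw (g1&H1&O1) (g2&H2&O2). destruct (Rep_spec B HB) as [HR _].
  exists g1. split; auto. rewrite <- (Hone _ _ _ _ HB HR H1 H2 v Bv) in O2.
  rewrite <- (Hone _ _ _ _ HB HR H1 H2 w Bw) in O2. eapply O_trans; eauto.
Qed.

Lemma ORD_R B u v : is_ball d B -> B u -> B v -> Rr B u v -> ORD B u v.
Proof.
  intros HB Bu Bv h. destruct (Rep_spec B HB) as [HR [g Hg]]. exists g. split; auto.
  apply O_R. apply (Rr_transp B (Rep B) g); auto.
Qed.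

Lemma ORD_anti B u v : is_ball d B -> B u -> B v -> ORD B u v -> ORD B v u ->
  u = v \/ Rr B u v.
Proof.
  intros HB Bu Bv (g1&H1&O1) (g2&H2&O2). destruct (Rep_spec B HB) as [HR _].
  rewrite <- (Hone _ _ _ _ HB HR H1 H2 v Bv) in O2.
  rewrite <- (Hone _ _ _ _ HB HR H1 H2 u Bu) in O2.
  destruct (S_surj _ _ _ HB HR H1) as (Hm&_).
  destruct (O_anti (Rep B) (g1 u) (g1 v) HR (Hm _ Bu) (Hm _ Bv) O1 O2) as [e|r].
  - left. apply (S_injective B (Rep B) g1); auto.
  - right. apply (Rr_transp B (Rep B) g1); auto.
Qed.

Lemma ORD_transp B B' h u v : is_ball d B -> is_ball d B' -> Sim B B' h -> B u -> B v ->
  ORD B u v -> ORD B' (h u) (h v).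
Proof.
  intros HB HB' Hh Bu Bv (g&Hg&Og). destruct (Rep_spec B HB) as [HR _].
  destruct (S_inv _ _ _ HB HB' Hh) as (k&Hk&Hkh&_).
  exists (fun x => g (k x)). rewrite <- (Rep_eq B B' h); auto. split.
  - apply (S_comp B' B (Rep B) k g); auto.
  - rewrite !Hkh; auto.
Qed.

Definition Bl x y := fun z => d x z <= d x y.

Lemma Bl_ball x y : x <> y -> is_ball d (Bl x y).
Proof. intro h. exists x, (d x y). split; [apply d_neq; auto|]. intro; unfold Bl; tauto. Qed.

Lemma Bl_sym x y : Bl x y = Bl y x.
Proof.
  assert (forall x y z, Bl x y z -> Bl y x z).
  { unfold Bl. intros a b z h. rewrite (d_sym b a). pose proof (d_sym b a). destruct (ult b a z); lra. }
  apply set_ext; split; auto.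
Qed.

Lemma Bl_R x y u v : Rr (Bl x y) u v <-> d u v < d x y.
Proof.
  unfold Bl. split.
  - intros (p&q&Bp&Bq&h). pose proof (d_sym p x). destruct (ult p x q); lra.
  - intro h. exists x, y. rewrite d_refl. repeat split; auto using d_pos; lra.
Qed.

Lemma Bl_x x y : Bl x y x. Proof. unfold Bl. rewrite d_refl. apply d_pos. Qed.
Lemma Bl_y x y : Bl x y y. Proof. unfold Bl. lra. Qed.

Lemma iso x y z : d x y < d y z -> d x z = d y z.
Proof. intro h. apply Rle_antisym.
  - destruct (ult x y z); lra.
  - pose proof (d_sym y x). destruct (ult y x z); lra. Qed.

Lemma Bl_change x y z : d x y < d y z -> Bl x z = Bl y z.
Proof.
  intro h. pose proof (iso _ _ _ h) as e. unfold Bl. rewrite e.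
  apply set_ext. intro w. split; intro hw.
  - pose proof (d_sym y x). destruct (ult y x w); lra.
  - destruct (ult x y w); lra.
Qed.

Definition le x y := x = y \/ ORD (Bl x y) x y.

Lemma le_trans x y z : le x y -> le y z -> le x z.
Proof.
  intros [<-|h1]; auto. intros [<-|h2]; [right; auto|].
  destruct (classic (x = y)) as [exy|nxy]; [subst; right; auto|].
  destruct (classic (y = z)) as [eyz|nyz]; [subst; right; auto|].
  destruct (classic (x = z)) as [exz|nxz]; [left; auto|]. right.
  destruct (Rtotal_order (d x y) (d y z)) as [lt|[eq|gt]].
  - rewrite (Bl_change x y z lt). pose proof (Bl_ball _ _ nyz) as HB.
    apply (ORD_trans _ x y z); auto using Bl_x, Bl_y.
    + unfold Bl. rewrite d_sym; lra.
    + apply ORD_R; auto using Bl_x, Bl_y. unfold Bl; rewrite d_sym; lra.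
      apply Bl_R; auto.
  - assert (E : Bl y z = Bl x y).
    { rewrite Bl_sym with (x := x). unfold Bl. rewrite <- eq, d_sym. auto. }
    rewrite E in h2. pose proof (Bl_ball _ _ nxy) as HB.
    assert (Bz : Bl x y z). { unfold Bl. destruct (ult x y z); lra. }
    assert (hxz : ORD (Bl x y) x z).
    { apply (ORD_trans _ x y z); auto using Bl_x, Bl_y. }
    destruct (Rle_lt_or_eq_dec _ _ Bz) as [lt|e].
    + exfalso. assert (ORD (Bl x y) z x).
      { apply ORD_R; auto using Bl_x. apply Bl_R. rewrite d_sym; auto. }
      assert (ORD (Bl x y) z y) by (apply (ORD_trans _ z x y); auto using Bl_x, Bl_y).
      destruct (ORD_anti _ y z HB (Bl_y _ _) Bz h2 H0) as [|r]; [contradiction|].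
      apply Bl_R in r. lra.
    + unfold Bl in *. rewrite e. auto.
  - assert (lt : d z y < d y x) by (rewrite (d_sym z y), (d_sym y x); lra).
    pose proof (iso _ _ _ lt) as e. rewrite (d_sym z x), (d_sym y x) in e.
    assert (E : Bl x z = Bl x y) by (unfold Bl; rewrite e; auto).
    rewrite E. pose proof (Bl_ball _ _ nxy) as HB.
    assert (Bz : Bl x y z). { unfold Bl. lra. }
    apply (ORD_trans _ x y z); auto using Bl_x, Bl_y.
    apply ORD_R; auto using Bl_y. apply Bl_R. lra.
Qed.

Lemma le_anti x y : le x y -> le y x -> x = y.
Proof.
  intros [|h1]; auto. intros [|h2]; auto.
  destruct (classic (x = y)) as [|nxy]; auto.
  rewrite Bl_sym in h2.
  destruct (ORD_anti _ x y (Bl_ball _ _ nxy) (Bl_x _ _) (Bl_y _ _) h1 h2) as [|r]; auto.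
  apply Bl_R in r. lra.
Qed.

Lemma le_total x y : le x y \/ le y x.
Proof.
  destruct (classic (x = y)) as [e|nxy]; [left; left; auto|].
  destruct (ORD_total (Bl x y) x y (Bl_ball _ _ nxy)); [left; right; auto|].
  right; right. rewrite Bl_sym. auto.
Qed.

Lemma le_pres B1 B2 h : is_ball d B1 -> is_ball d B2 -> Sim B1 B2 h ->
  order_preserving_on le B1 h.
Proof.
  intros HB1 HB2 Hh x y Bx By [e|hxy]; [left; subst; auto|].
  destruct (classic (x = y)) as [e|nxy]; [left; subst; auto|]. right.
  destruct (S_surj _ _ _ HB1 HB2 Hh) as (Hm&Hs&lam&hl&Hd).
  assert (nh : h x <> h y).
  { intro e. apply nxy. apply (S_injective B1 B2 h); auto. }
  assert (sub : subset (Bl x y) B1).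
  { intros w hw. apply (ball_in2 B1 x x y w); auto. }
  pose proof (S_res _ _ _ h HB1 HB2 (Bl_ball _ _ nxy) sub Hh) as HR.
  assert (E : image h (Bl x y) = Bl (h x) (h y)).
  { apply set_ext. intro w. unfold image, Bl. split.
    - intros (z&hz&<-). rewrite !Hd; auto.
      apply Rmult_le_compat_l; lra.
    - intros hw. assert (B2 w).
      { apply (ball_in2 B2 (h x) (h x) (h y) w); auto. }
      destruct (Hs w H) as (z&Bz&<-). exists z. split; auto.
      rewrite !Hd in hw; auto. apply Rmult_le_reg_l in hw; auto. }
  rewrite E in HR.
  apply (ORD_transp (Bl x y) _ h); auto using Bl_ball, Bl_x, Bl_y.
Qed.

End S.

Theorem lemma9p14 (X : Type) (d : X -> X -> R)
  (Sim : (X -> Prop) -> (X -> Prop) -> (X -> X) -> Prop)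
  (Hmet : is_metric d) (Hult : ultrametric d) (Hcpt : metric_compact d)
  (HSim : finite_similarity_structure d Sim)
  (Hone : forall B1 B2 h h', is_ball d B1 -> is_ball d B2 ->
     Sim B1 B2 h -> Sim B1 B2 h' -> forall x, B1 x -> h x = h' x) :
  exists le : X -> X -> Prop, linear_order le /\
    forall B1 B2 h, is_ball d B1 -> is_ball d B2 -> Sim B1 B2 h ->
      order_preserving_on le B1 h.
Proof.
  exists (le X d Sim). split.
  - split; [intro; left; auto|split; [|split]].
    + apply le_anti; auto.
    + apply le_trans; auto.
    + apply le_total; auto.
  - intros. eapply le_pres; eauto.
Qed.
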